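(* Let $\phi=(\phi_i)_{i\ge1}$ and $\psi=(\psi_i)_{i\ge1}$ be sequences of real numbers with $\psi_i>-2$ for all $i\ge1$, and define $\mathcal{H}_0^{\phi,\psi}=1$ and, for $n\ge0$, $$\mathcal{H}_{n+1}^{\phi,\psi}(x)=2x\mathcal{H}_n^{\phi,\psi}(x)-(\mathcal{H}_n^{\phi,\psi})'(x)+(\phi_{n+1}+x\psi_{n+1})\mathcal{H}_n^{\phi,\psi}(x).$$ Assume that for some integer $n\ge2$ we have $\phi_{n-1}=\phi_n$ and $\psi_{n-1}=\psi_n$. Then $$\big(\mathcal{H}_{n-1}^{\phi,\psi}(x)\big)^2-\mathcal{H}_n^{\phi,\psi}(x)\mathcal{H}_{n-2}^{\phi,\psi}(x)>0\quad\text{for all }x\in\mathbb{R}.$$ *)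

(* Defs.v *)
From mathcomp Require Import all_boot all_order all_algebra.
From mathcomp Require Import reals.
Set Implicit Arguments. Unset Strict Implicit. Unset Printing Implicit Defensive.
Import Order.TTheory GRing.Theory Num.Theory.
Local Open Scope ring_scope.

(* The polynomials H_n^{phi,psi}; phi, psi : nat -> R are indexed from 1
   (the values phi 0, psi 0 are never used).
   H_0 = 1, H_{n+1} = 2 X H_n - H_n' + (phi_{n+1} + X psi_{n+1}) H_n. *)
Fixpoint Hpoly (R : realType) (phi psi : nat -> R) (n : nat) : {poly R} :=
  match n with
  | O => 1
  | S m => let h := Hpoly phi psi m in
           2%:R *: ('X * h) - h^`() + ((phi m.+1)%:P + psi m.+1 *: 'X) * h
  end.

(* Main.v *)
Require Import Defs.
From mathcomp Require Import all_boot all_order all_algebra.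
From mathcomp Require Import reals.
From mathcomp Require Import polyrcf ring lra zify.
From Stdlib Require Classical_Prop.
Set Implicit Arguments. Unset Strict Implicit. Unset Printing Implicit Defensive.
Import Order.TTheory GRing.Theory Num.Theory.
Local Open Scope ring_scope.

Definition Pr (R : rcfType) (rs : seq R) : {poly R} := \prod_(r <- rs) ('X - r%:P).

Lemma Pr_cons (R : rcfType) (x : R) rs : Pr (x :: rs) = ('X - x%:P) * Pr rs.
Proof. by rewrite /Pr big_cons. Qed.

Lemma Pr_cat (R : rcfType) (s1 s2 : seq R) : Pr (s1 ++ s2) = Pr s1 * Pr s2.
Proof. by rewrite /Pr big_cat. Qed.

Lemma Pr_root (R : rcfType) (rs : seq R) r : r \in rs -> (Pr rs).[r] = 0.
Proof. by move=> h; apply/eqP; rewrite -/(root _ r) /Pr root_prod_XsubC. Qed.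

Lemma Pr_right (R : rcfType) (rs : seq R) y :
  (forall r, r \in rs -> r < y) -> 0 < (Pr rs).[y].
Proof.
elim: rs => [|x rs IH] h; first by rewrite /Pr big_nil hornerC ltr01.
rewrite Pr_cons hornerM hornerXsubC mulr_gt0 //.
  by rewrite subr_gt0 h // mem_head.
by apply: IH => r hr; apply: h; rewrite in_cons hr orbT.
Qed.

Lemma Pr_left (R : rcfType) (rs : seq R) y :
  (forall r, r \in rs -> y < r) -> 0 < (-1) ^+ size rs * (Pr rs).[y].
Proof.
elim: rs => [|x rs IH] h; first by rewrite /Pr big_nil hornerC expr0 mulr1 ltr01.
have hx : y < x by rewrite h // mem_head.
have h' : forall r, r \in rs -> y < r by move=> r hr; apply: h; rewrite in_cons hr orbT.
have := IH h'.
rewrite Pr_cons hornerM hornerXsubC /= exprS => H.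
have -> : - 1 * (-1) ^+ size rs * ((y - x) * (Pr rs).[y])
   = ((-1) ^+ size rs * (Pr rs).[y]) * (x - y) by ring.
by rewrite mulr_gt0 // subr_gt0.
Qed.

Lemma deriv_at_root (R : rcfType) (A B : {poly R}) z :
  B.[z] = 0 -> (A * B)^`().[z] = A.[z] * B^`().[z].
Proof. by move=> hB; rewrite derivM hornerD !hornerM hB mulr0 add0r. Qed.

Lemma deriv_XsubC_at (R : rcfType) (Q : {poly R}) x :
  (('X - x%:P) * Q)^`().[x] = Q.[x].
Proof.
by rewrite derivM derivXsubC mul1r hornerD hornerM hornerXsubC subrr mul0r addr0.
Qed.

Lemma Pr_first (R : rcfType) (rs : seq R) x :
  (forall r, r \in rs -> x < r) -> 0 < (-1) ^+ size rs * (Pr (x :: rs))^`().[x].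
Proof. by move=> h; rewrite Pr_cons deriv_XsubC_at; apply: Pr_left. Qed.

Lemma path_lt_all (R : rcfType) (x : R) rs : path <%R x rs -> forall r, r \in rs -> x < r.
Proof.
rewrite path_sortedE; last exact: lt_trans.
by case/andP => /allP h _ r hr; apply: h.
Qed.

Lemma path_le_last (R : rcfType) (x : R) rs : path <%R x rs -> x <= last x rs.
Proof.
move=> hp; have := mem_last x rs; rewrite in_cons => /orP [/eqP -> //|hm].
by apply: ltW; apply: path_lt_all hp _ hm.
Qed.

Lemma Pr_last (R : rcfType) (rs : seq R) x :
  path <%R x rs -> 0 < (Pr (x :: rs))^`().[last x rs].
Proof.
elim: rs x => [|y rs IH] x /=.
  by move=> _; rewrite Pr_cons /Pr big_nil mulr1 derivXsubC hornerC ltr01.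
case/andP => hxy hp.
rewrite Pr_cons derivM derivXsubC mul1r hornerD hornerM.
rewrite Pr_root ?mem_last // add0r hornerXsubC mulr_gt0 ?IH //.
by rewrite subr_gt0; apply: lt_le_trans hxy (path_le_last hp).
Qed.
Lemma sorted_cat_lt (R : rcfType) (s1 s2 : seq R) a b :
  sorted <%R (s1 ++ s2) -> a \in s1 -> b \in s2 -> a < b.
Proof.
rewrite sorted_pairwise; last exact: lt_trans.
rewrite pairwise_cat => /and3P [/allrelP h _ _]; exact: h.
Qed.

Lemma Pr_consec (R : rcfType) (L : seq R) rs : forall pre x,
  L = pre ++ x :: rs -> sorted <%R L ->
  path (fun a b => (Pr L)^`().[a] * (Pr L)^`().[b] < 0) x rs.
Proof.
elim: rs => [|y rs IH] pre x hL hs //=.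
apply/andP; split; last first.
  by apply: (IH (rcons pre x)) => //; rewrite hL cat_rcons.
have hxy : x < y.
  apply: (@sorted_cat_lt _ (pre ++ [:: x]) (y :: rs)); last exact: mem_head.
    by rewrite -catA -hL.
  by rewrite mem_cat mem_head orbT.
have hpre : forall r, r \in pre -> r < x.
  by move=> r hr; apply: (@sorted_cat_lt _ pre (x::y::rs)); rewrite ?mem_head // -hL.
have hrs : forall r, r \in rs -> y < r.
  move=> r hr; apply: (@sorted_cat_lt _ (pre ++ [:: x; y]) rs) => //.
    by rewrite -catA -hL.
  by rewrite mem_cat !in_cons eqxx !orbT.
have hrsx : forall r, r \in rs -> x < r by move=> r hr; apply: lt_trans hxy (hrs r hr).
rewrite hL Pr_cat.
rewrite deriv_at_root; last by apply: Pr_root; rewrite mem_head.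
rewrite (@deriv_at_root _ _ (Pr (x :: y :: rs)) y); last by apply: Pr_root; rewrite !in_cons eqxx orbT.
have ex : (Pr [:: x, y & rs])^`().[x] = (x - y) * (Pr rs).[x].
  by rewrite Pr_cons deriv_XsubC_at Pr_cons hornerM hornerXsubC.
have ey : (Pr [:: x, y & rs])^`().[y] = (y - x) * (Pr rs).[y].
  have -> : Pr [:: x, y & rs] = ('X - y%:P) * (('X - x%:P) * Pr rs) by rewrite !Pr_cons mulrCA.
  by rewrite deriv_XsubC_at hornerM hornerXsubC.
rewrite ex ey.
have h1 := Pr_right hpre.
have h2 : 0 < (Pr pre).[y] by apply: Pr_right => r hr; apply: lt_trans (hpre r hr) hxy.
have h3 := Pr_left hrsx.
have h4 := Pr_left hrs.
set e := (-1) ^+ size rs in h3 h4.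
have he : e * e = 1 by rewrite /e -exprMn mulrNN mulr1 expr1n.
have -> : (Pr pre).[x] * ((x - y) * (Pr rs).[x]) * ((Pr pre).[y] * ((y - x) * (Pr rs).[y]))
  = - (((Pr pre).[x] * (Pr pre).[y]) * ((y - x) * (y - x)) * ((e * (Pr rs).[x]) * (e * (Pr rs).[y]))).
  have -> : (e * (Pr rs).[x]) * (e * (Pr rs).[y]) = (e * e) * ((Pr rs).[x] * (Pr rs).[y]) by ring.
  rewrite he; ring.
rewrite oppr_lt0 (mulr_gt0 _ (mulr_gt0 h3 h4)) //.
by rewrite !mulr_gt0 // subr_gt0.
Qed.
Lemma interlace (R : rcfType) (u : {poly R}) x rs :
  path (fun a b => u.[a] * u.[b] < 0) x rs -> path <%R x rs ->
  exists ms, [/\ size ms = size rs, all (root u) ms, path <%R x ms & last x ms <= last x rs].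
Proof.
elim: rs x => [|y rs IH] x /=; first by move=> _ _; exists [::].
case/andP => hu hpu /andP [hxy hp].
have [ms [h1 h2 h3 h4]] := IH y hpu hp.
have [z hz rz] := polyrcf.poly_ivtoo (ltW hxy) hu.
move: hz; rewrite in_itv /= => /andP [hxz' hzy'].
exists (z :: ms); split => //=.
- by rewrite h1.
- by rewrite rz.
- rewrite hxz' /=; case: ms {h1 h2 h4} h3 => //= m ms' /andP [hym ->].
  by rewrite (lt_trans hzy' hym).
- move: h1 h3 h4; clear h2; case: ms => [|m ms'] //= h1 h3 h4.
  by move: h1 hp; clear IH hpu h4; case: rs => //= _ _; rewrite ltW.
Qed.
Lemma factor (R : rcfType) (u : {poly R}) rs k :
  size u = (size rs).+1 -> all (root u) rs -> uniq rs -> lead_coef u = k ->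
  u = k *: Pr rs.
Proof.
move=> hs hr hu hl.
have hur : poly.uniq_roots rs by rewrite uniq_rootsE.
have [q hq] := uniq_roots_prod_XsubC hr hur.
have hP0 : Pr rs != 0 by rewrite -size_poly_eq0 /Pr size_prod_XsubC.
have hq0 : q != 0 by apply: contra_eq_neq hq => ->; rewrite mul0r -size_poly_eq0 hs.
move: hs; rewrite hq size_mul // /Pr size_prod_XsubC addnS /= => hs.
have hq1 : size q = 1%N.
  by move: hs; rewrite addnC -addn1 => /addnI.
rewrite /Pr (size1_polyC (eq_leq hq1)) mul_polyC; congr (_ *: _).
move: hl; rewrite hq lead_coefM (monicP (monic_prod_XsubC _ _ _)) mulr1.
by move=> <-; rewrite /lead_coef hq1.
Qed.

Lemma size_lead_u (R : rcfType) (f : {poly R}) (c : R) rs (a s : R) :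
  0 < c -> 0 < s -> f = c *: Pr rs ->
  size ((a%:P + s *: 'X) * f - f^`()) = (size rs).+2 /\
  lead_coef ((a%:P + s *: 'X) * f - f^`()) = c * s.
Proof.
move=> hc hs hf.
have hsA : size (a%:P + s *: 'X) = 2%N.
  by rewrite addrC size_polyDl size_scale ?gt_eqF // size_polyX // (leq_ltn_trans (size_polyC_leq1 _)).
have hlA : lead_coef (a%:P + s *: 'X) = s.
  rewrite addrC lead_coefDl ?lead_coefZ ?lead_coefX ?mulr1 //.
  by rewrite size_scale ?gt_eqF // size_polyX (leq_ltn_trans (size_polyC_leq1 _)).
have hsf : size f = (size rs).+1 by rewrite hf size_scale ?gt_eqF // /Pr size_prod_XsubC.
have hlf : lead_coef f = c by rewrite hf lead_coefZ (monicP (monic_prod_XsubC _ _ _)) mulr1.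
have hA0 : a%:P + s *: 'X != 0 by rewrite -size_poly_eq0 hsA.
have hf0 : f != 0 by rewrite -size_poly_eq0 hsf.
have hsAf : size ((a%:P + s *: 'X) * f) = (size rs).+2 by rewrite size_mul // hsA hsf.
have hd : leq (size (- f^`())).+1 (size ((a%:P + s *: 'X) * f)).
  by rewrite size_polyN hsAf (leq_trans (lt_size_deriv hf0)) // hsf.
split; first by rewrite size_polyDl.
by rewrite lead_coefDl // lead_coefM hlA hlf mulrC.
Qed.
Lemma path_lt_shift (R : rcfType) (x y : R) s : y < x -> path <%R x s -> path <%R y s.
Proof. by case: s => //= z s hyx /andP [hxz ->]; rewrite (lt_trans hyx hxz). Qed.

Lemma step (R : rcfType) (f : {poly R}) (c : R) rs (a s : R) :
  0 < c -> 0 < s -> sorted <%R rs -> f = c *: Pr rs ->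
  exists rs', [/\ size rs' = (size rs).+1, sorted <%R rs' &
    (a%:P + s *: 'X) * f - f^`() = (c * s) *: Pr rs'].
Proof.
move=> hc hs hsort hf.
have [hsz hld] := size_lead_u a hc hs hf.
set u := (a%:P + s *: 'X) * f - f^`() in hsz hld *.
suff [rs' [h1 h2 h3]] : exists rs', [/\ size rs' = (size rs).+1, sorted <%R rs' & all (root u) rs'].
  exists rs'; split => //; apply: factor => //; first by rewrite h1.
  by apply: (sorted_uniq lt_trans) => //; exact: ltxx.
have hu_at : forall r, r \in rs -> u.[r] = - (c * (Pr rs)^`().[r]).
  move=> r hr; rewrite /u hornerD hornerN hornerM hf hornerZ Pr_root // mulr0 mulr0 add0r.
  by rewrite derivZ hornerZ.
case: rs hsort hf hsz hu_at => [|x rs0] hsort hf hsz hu_at.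
  exists [:: - a / s]; split => //=; rewrite andbT /root /u hf /Pr big_nil.
  rewrite derivZ derivC scaler0 subr0 hornerM hornerZ hornerC mulr1 hornerD hornerZ hornerX hornerC.
  by rewrite [s * _]mulrC divfK ?lt0r_neq0 // subrr mul0r.
have hp : path <%R x rs0 by [].
have hall := path_lt_all hp.
have hcons : path (fun a b => u.[a] * u.[b] < 0) x rs0.
  have := @Pr_consec R (x :: rs0) rs0 [::] x erefl hsort.
  apply: (@sub_in_path _ (mem (x :: rs0))); last by apply/allP.
  move=> p q hp' hq' /=; rewrite !hu_at //.
  have -> : - (c * (Pr (x :: rs0))^`().[p]) * - (c * (Pr (x :: rs0))^`().[q])
     = (c * c) * ((Pr (x :: rs0))^`().[p] * (Pr (x :: rs0))^`().[q]) by ring.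
  by move=> h; rewrite pmulr_rlt0 // mulr_gt0.
have [ms [m1 m2 m3 m4]] := interlace hcons hp.
have hfirst := Pr_first hall.
have [z0 [hz0 rz0]] : exists z, z < x /\ root u z.
  case: (Classical_Prop.classic (exists z, z < x /\ root u z)) => // hn; exfalso.
  have hux : u.[x] = - (c * (Pr (x :: rs0))^`().[x]) by rewrite hu_at ?mem_head.
  have hnr : {in `]-oo, x], forall y, ~~ root u y}.
    move=> y hy; have : y <= x by rewrite (itvP hy).
    rewrite le_eqVlt => /orP [/eqP ->|hyx].
      rewrite /root hux oppr_eq0 mulf_eq0 gt_eqF //=.
      by apply/eqP => h; move: hfirst; rewrite h mulr0 ltxx.
    by apply/negP => ry; apply: hn; exists y.
  have : Num.sg u.[x] = sgp_minfty u.
    by apply: (sgp_minftyP hnr); rewrite in_itv /= lexx.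
  rewrite /sgp_minfty hsz hld /= => hsg.
  set e := (-1) ^+ size rs0 in hfirst.
  have he : e * e = 1 by rewrite /e -exprMn mulrNN mulr1 expr1n.
  have hee : (-1) ^+ (size rs0).+2 = e by rewrite !exprS mulN1r mulN1r opprK.
  have : 0 < Num.sg (e * u.[x]).
    rewrite sgrM hsg hee -sgrM mulrA he mul1r.
    by rewrite sgr_gt0 mulr_gt0.
  rewrite sgr_gt0 hux mulrN.
  have -> : e * (c * (Pr (x :: rs0))^`().[x]) = c * (e * (Pr (x :: rs0))^`().[x]) by ring.
  by rewrite oppr_gt0 ltNge ltW // mulr_gt0.
set l := last x rs0.
have hlast := Pr_last hp.
have [zl [hzl rzl]] : exists z, l < z /\ root u z.
  case: (Classical_Prop.classic (exists z, l < z /\ root u z)) => // hn; exfalso.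
  have hul : u.[l] = - (c * (Pr (x :: rs0))^`().[l]) by rewrite hu_at // /l mem_last.
  have hnr : {in `[l, +oo[, forall y, ~~ root u y}.
    move=> y hy; have : l <= y by rewrite (itvP hy).
    rewrite le_eqVlt => /orP [/eqP <-|hyx].
      rewrite /root hul oppr_eq0 mulf_eq0 gt_eqF //=.
      by rewrite gt_eqF.
    by apply/negP => ry; apply: hn; exists y.
  have : Num.sg u.[l] = sgp_pinfty u.
    by apply: (sgp_pinftyP hnr); rewrite in_itv /= lexx.
  rewrite /sgp_pinfty hld (gtr0_sg (mulr_gt0 hc hs)) => hsg.
  have : 0 < Num.sg u.[l] by rewrite hsg ltr01.
  by rewrite sgr_gt0 hul oppr_gt0 ltNge ltW // mulr_gt0.
exists (z0 :: ms ++ [:: zl]); split.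
- by rewrite /= size_cat m1 addn1.
- rewrite /= (path_lt_shift hz0) // cat_path m3 /= andbT.
  by apply: le_lt_trans m4 hzl.
- by rewrite /= rz0 all_cat m2 /= rzl.
Qed.
Lemma lag (R : rcfType) (rs : seq R) x :
  0 <= (Pr rs)^`().[x] ^+ 2 - (Pr rs).[x] * (Pr rs)^`()^`().[x].
Proof.
elim: rs => [|r rs IH]; first by rewrite /Pr big_nil derivC derivC !hornerC mulr0 subr0 expr2 mulr0.
set Q := Pr rs in IH *.
have e1 : (Pr (r :: rs))^`() = Q + ('X - r%:P) * Q^`() by rewrite Pr_cons derivM derivXsubC mul1r.
have e2 : (Pr (r :: rs))^`()^`() = Q^`() + (Q^`() + ('X - r%:P) * Q^`()^`()).
  by rewrite e1 derivD derivM derivXsubC mul1r.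
rewrite e2 e1 Pr_cons -/Q.
rewrite !hornerD !hornerM !hornerXsubC.
set t := x - r.
have -> : (Q.[x] + t * Q^`().[x]) ^+ 2 - t * Q.[x] * (Q^`().[x] + (Q^`().[x] + t * Q^`()^`().[x]))
  = Q.[x] ^+ 2 + t ^+ 2 * (Q^`().[x] ^+ 2 - Q.[x] * Q^`()^`().[x]) by ring.
by rewrite addr_ge0 ?sqr_ge0 // mulr_ge0 ?sqr_ge0.
Qed.

Lemma simple_root (R : rcfType) (rs : seq R) x :
  uniq rs -> (Pr rs).[x] = 0 -> (Pr rs)^`().[x] != 0.
Proof.
elim: rs => [|r rs IH] /=; first by rewrite /Pr big_nil hornerC => _ /eqP; rewrite oner_eq0.
case/andP => hr hu.
rewrite Pr_cons derivM derivXsubC mul1r hornerD !hornerM hornerXsubC.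
have [exr|hxr] := eqVneq x r.
  subst r; rewrite subrr !mul0r addr0 => _.
  apply/eqP => h; move: hr; rewrite -root_prod_XsubC /root.
  by move: h; rewrite /Pr => ->; rewrite eqxx.
move/eqP; rewrite mulf_eq0 subr_eq0 (negPf hxr) /= => /eqP hQ.
by rewrite hQ add0r mulf_neq0 ?subr_eq0 // IH.
Qed.

Lemma turan_id (R : rcfType) (h : {poly R}) (a s x : R) :
  let A := a%:P + s *: 'X in
  let g := A * h - h^`() in
  g.[x] ^+ 2 - (A * g - g^`()).[x] * h.[x]
  = h^`().[x] ^+ 2 - h.[x] * h^`()^`().[x] + s * h.[x] ^+ 2.
Proof.
move=> A g; rewrite /g /A.
rewrite !(derivD, derivB, derivN, derivM, derivZ, derivX, derivC).
rewrite !(hornerD, hornerN, hornerM, hornerZ, hornerX, hornerC).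
ring.
Qed.
Lemma Hpoly_rec (R : realType) (phi psi : nat -> R) k :
  Hpoly phi psi k.+1 = ((phi k.+1)%:P + (2 + psi k.+1) *: 'X) * Hpoly phi psi k
                        - (Hpoly phi psi k)^`().
Proof.
rewrite /= -!mul_polyC polyCD.
set h := Hpoly phi psi k.
ring.
Qed.

Lemma Hroots (R : realType) (phi psi : nat -> R) :
  (forall i : nat, (1 <= i)%N -> -2 < psi i) ->
  forall k, exists c (rs : seq R), [/\ 0 < c, sorted <%R rs & Hpoly phi psi k = c *: Pr rs].
Proof.
move=> hpsi; elim => [|k [c [rs [hc hs he]]]].
  by exists 1, [::]; rewrite /Pr big_nil scale1r ltr01.
have hs2 : 0 < 2 + psi k.+1 by have := hpsi k.+1 isT; lra.
have [rs' [h1 h2 h3]] := step (phi k.+1) hc hs2 hs he.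
by exists (c * (2 + psi k.+1)), rs'; rewrite Hpoly_rec h3 mulr_gt0.
Qed.

Unset Implicit Arguments.

Theorem theorem3p4 (R : realType) (phi psi : nat -> R)
  (hpsi : forall i : nat, (1 <= i)%N -> -2 < psi i)
  (n : nat) (hn : (2 <= n)%N)
  (hphi : phi n.-1 = phi n) (hpsi' : psi n.-1 = psi n) :
  forall x : R,
    0 < (Hpoly phi psi n.-1).[x] ^+ 2
        - (Hpoly phi psi n).[x] * (Hpoly phi psi n.-2).[x].
Proof.
move=> x.
case: n hn hphi hpsi' => [|[|k]] // _ hphi hpsi'.
change (0 < (Hpoly phi psi k.+1).[x] ^+ 2 - (Hpoly phi psi k.+2).[x] * (Hpoly phi psi k).[x]).
rewrite /= in hphi hpsi'.
set s := 2 + psi k.+1.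
have hs : 0 < s by rewrite /s; have := hpsi k.+1 isT; lra.
rewrite (Hpoly_rec phi psi k.+1) -hphi -hpsi' -/s.
rewrite (Hpoly_rec phi psi k) -/s.
rewrite (turan_id (Hpoly phi psi k) (phi k.+1) s x).
have [c [rs [hc hso he]]] := @Hroots R phi psi hpsi k.
rewrite he !derivZ !hornerZ.
set P := Pr rs.
have -> : (c * P^`().[x]) ^+ 2 - c * P.[x] * (c * P^`()^`().[x]) + s * (c * P.[x]) ^+ 2
  = (c * c) * ((P^`().[x] ^+ 2 - P.[x] * P^`()^`().[x]) + s * P.[x] ^+ 2) by ring.
rewrite pmulr_rgt0 ?mulr_gt0 //.
have hl := lag rs x.
have [hP|hP] := eqVneq P.[x] 0.
  rewrite hP mul0r subr0 expr0n /= mulr0 addr0 exprn_even_gt0 //=.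
  exact: simple_root (sorted_uniq lt_trans (@ltxx _ _) hso) hP.
by rewrite ltr_pwDr // mulr_gt0 // exprn_even_gt0.
Qed.
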